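(* Let $k$ be a field of characteristic $0$. If $V$ is a finitely generated $\mathrm{FI}\sharp^m$-module, then there is a single character polynomial $P$ such that $\chi_{V_{\mathbf d}}=P$ on $S_{\mathbf d}$ for all $\mathbf d\in\mathbb{N}^m$.
   Context: $\mathrm{FI}\sharp^m$ is the category with objects $\mathbf d\in\mathbb{N}^m$ and morphisms $\mathbf x\to\mathbf y$ given by pairs $(\mathbf z,f)$ with $\mathbf z\subset\mathbf x$ and $f:\mathbf z\hookrightarrow\mathbf y$ an $m$-tuple of injections (partial injections); an $\mathrm{FI}\sharp^m$-module is a functor from it to $k$-vector spaces, finitely generated if generated by finitely many elements. $S_{\mathbf d}=S_{d_1}\times\cdots\times S_{d_m}$. A character polynomial is an element of $k[\{X^{(i)}_j\}]$, where $X^{(i)}_j$ is the class function on $S_{\mathbf d}$ (for every $\mathbf d$) counting the $j$-cycles in the $S_{d_i}$ component. *)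

(* Defs.v *)
From HB Require Import structures.
From mathcomp Require Import all_boot all_order all_fingroup all_algebra.
Set Implicit Arguments. Unset Strict Implicit. Unset Printing Implicit Defensive.
Import GRing.Theory.
Local Open Scope ring_scope.

Definition obj (m : nat) := m.-tuple nat.

(* Raw morphisms x -> y : an m-tuple of partial functions
   'I_(x_i) -> option 'I_(y_i) (None = "not in the domain z_i"). *)
Definition mor (m : nat) (x y : obj m) :=
  {dffun forall i : 'I_m, {ffun 'I_(tnth x i) -> option 'I_(tnth y i)}}.

Definition pinjb (a b : nat) (f : {ffun 'I_a -> option 'I_b}) : bool :=
  [forall u, forall v, ((f u != None) && (f u == f v)) ==> (u == v)].

Definition isMor (m : nat) (x y : obj m) (f : mor x y) : bool :=
  [forall i, pinjb (f i)].

Definition idm (m : nat) (x : obj m) : mor x x :=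
  [ffun i => [ffun a => Some a]].

Definition comp (m : nat) (x y z : obj m) (g : mor y z) (f : mor x y) : mor x z :=
  [ffun i => [ffun a => obind (g i) (f i a)]].

(* An FI#^m-module over k, with each V_d a finite-dimensional k-space
   k^(dimV d) (row vectors); a morphism f acts by v |-> v *m act f. *)
Record FIsharp_mod (k : fieldType) (m : nat) := FIsharpMod {
  dimV : obj m -> nat;
  act : forall x y : obj m, mor x y -> 'M[k]_(dimV x, dimV y);
  act_id : forall x, act (idm x) = 1%:M;
  act_comp : forall (x y z : obj m) (f : mor x y) (g : mor y z),
      isMor f -> isMor g -> act (comp g f) = act f *m act g
}.

Definition fin_gen (k : fieldType) (m : nat) (V : FIsharp_mod k m) : Prop :=
  exists gens : seq {x : obj m & 'rV[k]_(dimV V x)},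
    forall y : obj m,
      (1%:M <= (\sum_(g <- gens)
                  (\sum_(f : mor (tag g) y | isMor f)
                     <<tagged g *m act V f>>)%MS)%MS)%MS.

Definition Sd (m : nat) (d : obj m) :=
  {dffun forall i : 'I_m, {perm 'I_(tnth d i)}}.

Definition permmor (m : nat) (d : obj m) (s : Sd d) : mor d d :=
  [ffun i => [ffun a => Some (s i a)]].

Definition character (k : fieldType) (m : nat) (V : FIsharp_mod k m)
  (d : obj m) (s : Sd d) : k := \tr (act V (permmor s)).

(* number of j-cycles of a permutation (fixed points are 1-cycles) *)
Definition ncycles (n j : nat) (s : {perm 'I_n}) : nat :=
  #|[set C in porbits s | #|C| == j]|.

Definition Xvar (m : nat) (i : 'I_m) (j : nat) (d : obj m) (s : Sd d) : nat :=
  ncycles j (s i).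

(* Character polynomials: elements of k[{X^{(i)}_j : i < m, j >= 1}],
   represented as finite sums of coefficient * monomial, a monomial being a
   list of variables (i, j) (with repetition), the pair (i, j) standing for
   X^{(i)}_{j+1}. *)
Definition charpoly (k : fieldType) (m : nat) := seq (k * seq ('I_m * nat)).

Definition cp_eval (k : fieldType) (m : nat) (P : charpoly k m)
  (d : obj m) (s : Sd d) : k :=
  \sum_(t <- P) t.1 * \prod_(v <- t.2) (Xvar v.1 v.2.+1 s)%:R.

(* Main.v *)
From Stdlib Require Import Classical.
Require Import Defs.
From HB Require Import structures.
From mathcomp Require Import all_boot all_order all_fingroup all_algebra.
Set Implicit Arguments. Unset Strict Implicit. Unset Printing Implicit Defensive.

Module PA.
Import GRing.Theory.
Local Open Scope ring_scope.

Section CP.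
Variables (k : fieldType) (m : nat).
Implicit Types (P Q : charpoly k m).

Definition cp_mul P Q : charpoly k m := [seq (a.1 * b.1, a.2 ++ b.2) | a <- P, b <- Q].
Definition cp_const (c : k) : charpoly k m := [:: (c, [::])].
Definition cp_var (v : 'I_m * nat) : charpoly k m := [:: (1, [:: v])].

Lemma cp_eval_cat P Q d (s : Sd d) : cp_eval (P ++ Q) s = cp_eval P s + cp_eval Q s.
Proof. by rewrite /cp_eval big_cat. Qed.

Lemma cp_eval_mul P Q d (s : Sd d) : cp_eval (cp_mul P Q) s = cp_eval P s * cp_eval Q s.
Proof.
rewrite /cp_eval /cp_mul big_allpairs_dep big_distrl /=; apply: eq_bigr => a _.
rewrite big_distrr /=; apply: eq_bigr => b _ /=.
rewrite big_cat /= -!mulrA; congr (_ * _); exact: mulrCA.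
Qed.

Lemma cp_eval_const c d (s : Sd d) : cp_eval (cp_const c) s = c.
Proof. by rewrite /cp_eval big_seq1 /= big_nil mulr1. Qed.

Lemma cp_eval_var v d (s : Sd d) : cp_eval (cp_var v) s = (Xvar v.1 v.2.+1 s)%:R.
Proof. by rewrite /cp_eval big_seq1 /= big_seq1 mul1r. Qed.

Definition cp_sumF (I : Type) (r : seq I) (F : I -> charpoly k m) : charpoly k m :=
  flatten (map F r).
Definition cp_prodF (I : Type) (r : seq I) (F : I -> charpoly k m) : charpoly k m :=
  foldr (fun i P => cp_mul (F i) P) (cp_const 1) r.

Lemma cp_eval_sumF (I : Type) (r : seq I) F d (s : Sd d) :
  cp_eval (cp_sumF r F) s = \sum_(i <- r) cp_eval (F i) s.
Proof.
elim: r => [|i r IH]; first by rewrite /cp_eval !big_nil.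
by rewrite /cp_sumF /= cp_eval_cat big_cons -IH.
Qed.

Lemma cp_eval_prodF (I : Type) (r : seq I) F d (s : Sd d) :
  cp_eval (cp_prodF r F) s = \prod_(i <- r) cp_eval (F i) s.
Proof.
elim: r => [|i r IH]; first by rewrite big_nil cp_eval_const.
by rewrite /cp_prodF /= cp_eval_mul big_cons -IH.
Qed.

Lemma prod_ffact (n r : nat) :
  \prod_(0 <= t < r) (n%:R - t%:R : k) = (n ^_ r)%:R.
Proof.
elim: r => [|r IH]; first by rewrite big_geq // ffactn0.
rewrite big_nat_recr //= IH ffactnSr natrM.
case: (leqP r n) => [le_rn|lt_nr]; first by rewrite natrB.
by rewrite ffact_small // !mul0r.
Qed.

Definition binpoly (v : 'I_m * nat) (r : nat) : charpoly k m :=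
  cp_mul (cp_const (r`!%:R)^-1)
    (cp_prodF (iota 0 r) (fun t => cp_var v ++ cp_const (- t%:R))).

Lemma cp_eval_binpoly v r d (s : Sd d) :
  [pchar k] =i pred0 ->
  cp_eval (binpoly v r) s = ('C(Xvar v.1 v.2.+1 s, r))%:R.
Proof.
move=> /pcharf0P c0.
rewrite /binpoly cp_eval_mul cp_eval_const cp_eval_prodF.
have -> : \prod_(i <- iota 0 r) cp_eval (cp_var v ++ cp_const (- i%:R)) s
   = \prod_(0 <= t < r) ((Xvar v.1 v.2.+1 s)%:R - t%:R : k).
  rewrite /index_iota subn0; apply: eq_bigr => t _.
  by rewrite cp_eval_cat cp_eval_var cp_eval_const.
rewrite prod_ffact -bin_ffact natrM mulrC mulrK //.
by rewrite unitfE c0 -lt0n fact_gt0.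
Qed.

End CP.


Lemma toggle_sum (T : finType) (M : zmodType) (P : pred {set T}) (F : {set T} -> M) (p : T) :
  (forall X : {set T}, p \notin X -> P (p |: X) = P X) ->
  (forall X : {set T}, p \notin X -> F (p |: X) = - F X) ->
  \sum_(X | P X) F X = 0.
Proof.
move=> HP HF.
rewrite (bigID (fun X : {set T} => p \in X)) /=.
rewrite (reindex_onto (fun Y => p |: Y) (fun X => X :\ p)) /=; last first.
  by move=> X /andP[_ pX]; rewrite setD1K.
rewrite (eq_bigl (fun X => P X && (p \notin X))); last first.
  move=> X /=; rewrite setU11 andbT.
  case pX: (p \in X) => /=.
    rewrite andbF; apply/negbTE; rewrite negb_and; apply/orP; right; apply/eqP => E.
    by move: pX; rewrite -E setD11.
  by rewrite setU1K ?pX // eqxx HP ?pX // andbT.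
rewrite -big_split /=; apply: big1 => X /andP[_ pX].
by rewrite HF // addNr.
Qed.

Notation mcomp := Defs.comp.
Notation midm := Defs.idm.
Notation mact := Defs.act.

Section Core.
Variables (k : fieldType) (m : nat) (V : FIsharp_mod k m).

Definition Pt (d : obj m) := {i : 'I_m & 'I_(tnth d i)}.
Definition tg (d : obj m) (i : 'I_m) (a : 'I_(tnth d i)) : Pt d :=
  Tagged (fun i => 'I_(tnth d i)) a.

Definition iot (d : obj m) (T : {set Pt d}) : mor d d :=
  [ffun i => [ffun a => if tg a \in T then Some a else None]].

Lemma iotE d (T : {set Pt d}) (i : 'I_m) (a : 'I_(tnth d i)) : iot T i a = if tg a \in T then Some a else None.
Proof. by rewrite !ffunE. Qed.

Lemma compE (x y z : obj m) (g : mor y z) (f : mor x y) (i : 'I_m) (a : 'I_(tnth x i)) :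
  mcomp g f i a = obind (g i) (f i a).
Proof. by rewrite !ffunE. Qed.

Lemma permmorE d (s : Sd (m:=m) d) (i : 'I_m) (a : 'I_(tnth d i)) : permmor s i a = Some (s i a).
Proof. by rewrite !ffunE. Qed.

Lemma idmE d (i : 'I_m) (a : 'I_(tnth d i)) : midm d i a = Some a.
Proof. by rewrite !ffunE. Qed.

Lemma morP (x y : obj m) (f g : mor x y) : (forall (i : 'I_m) (a : 'I_(tnth x i)), f i a = g i a) -> f = g.
Proof. by move=> H; apply/ffunP => i; apply/ffunP => a; apply: H. Qed.


Lemma isMorP (x y : obj m) (f : mor x y) :
  reflect (forall (i : 'I_m) (u v : 'I_(tnth x i)), f i u != None -> f i u = f i v -> u = v)
          (isMor f).
Proof.
apply: (iffP forallP) => [H i u v nu uv | H i].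
  by move: (H i) => /forallP/(_ u)/forallP/(_ v)/implyP; rewrite nu uv eqxx => /(_ isT)/eqP.
apply/forallP => u; apply/forallP => v; apply/implyP => /andP[nu /eqP uv].
by apply/eqP; apply: H.
Qed.

Lemma isMor_iot d (T : {set Pt d}) : isMor (iot T).
Proof.
apply/isMorP => i u v; rewrite !iotE.
by case: ifP => // _ _; case: ifP => // _ [].
Qed.

Lemma isMor_perm d (s : Sd (m:=m) d) : isMor (permmor s).
Proof. by apply/isMorP => i u v; rewrite !permmorE => _ [] /perm_inj. Qed.

Lemma isMor_comp (x y z : obj m) (g : mor y z) (f : mor x y) :
  isMor f -> isMor g -> @isMor m x z (mcomp g f).
Proof.
move=> /isMorP Hf /isMorP Hg; apply/isMorP => i u v; rewrite !compE.
case fu: (f i u) => [a|] //=; case fv: (f i v) => [b|] /=; last by move=> + E; rewrite E.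
move=> nga gab; have ab := Hg i a b nga gab.
by apply: (Hf i); rewrite ?fu ?fv ?ab.
Qed.

Definition Amat d (T : {set Pt d}) := mact V (iot T).
Definition Pmat d (s : Sd (m:=m) d) := mact V (permmor s).

Lemma comp_iot d (T U : {set Pt d}) : mcomp (iot U) (iot T) = iot (T :&: U).
Proof.
apply: morP => i a; rewrite compE !iotE inE.
by case: (tg a \in T) => //=; rewrite iotE.
Qed.

Lemma A_mul d (T U : {set Pt d}) : Amat T *m Amat U = Amat (T :&: U).
Proof. by rewrite /Amat -act_comp ?isMor_iot // comp_iot. Qed.

Lemma A_setT d : Amat [set: Pt d] = 1%:M.
Proof.
rewrite /Amat -(act_id V d); congr (mact V _).
by apply: morP => i a; rewrite iotE idmE inE.
Qed.

Lemma A_comm d (T U : {set Pt d}) : Amat T *m Amat U = Amat U *m Amat T.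
Proof. by rewrite !A_mul setIC. Qed.

Definition sh d (s : Sd (m:=m) d) (p : Pt d) : Pt d := tg (s (tag p) (tagged p)).

Lemma sh_inj d (s : Sd (m:=m) d) : injective (sh s).
Proof.
move=> [i a] [j b]; rewrite /sh /tg /= => E.
have ij : i = j := congr1 tag E; subst j.
by have /perm_inj -> := eq_from_Tagged E.
Qed.

Definition shat d (s : Sd (m:=m) d) : {perm Pt d} := perm (@sh_inj d s).

Lemma shat_tg d (s : Sd (m:=m) d) i (a : 'I_(tnth d i)) : shat s (tg a) = tg (s i a).
Proof. by rewrite permE. Qed.

Lemma A_perm d (s : Sd (m:=m) d) (T : {set Pt d}) :
  Amat T *m Pmat s = Pmat s *m Amat (shat s @: T).
Proof.
rewrite /Amat /Pmat -!act_comp ?isMor_iot ?isMor_perm //; congr (mact V _).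
apply: morP => i a; rewrite !compE iotE permmorE /= iotE -shat_tg mem_imset //.
  by case: ifP => // _; rewrite /= permmorE.
exact: perm_inj.
Qed.

Definition sgn (T : finType) (X : {set T}) : k := (-1) ^+ #|X|.

Lemma sgnU1 (T : finType) (X : {set T}) p : p \notin X -> sgn (p |: X) = - sgn X.
Proof. by move=> pX; rewrite /sgn cardsU1 pX exprS mulN1r. Qed.

Lemma sgn_sq (T : finType) (X : {set T}) : sgn X * sgn X = 1.
Proof. by rewrite /sgn -exprD addnn -mul2n exprM sqrrN !expr1n. Qed.

Definition E d (T : {set Pt d}) :=
  \sum_(U : {set Pt d} | U \subset T) (sgn T * sgn U) *: Amat U.

Lemma sum_E d : \sum_(T : {set Pt d}) E T = 1%:M.
Proof.
rewrite /E (exchange_big_dep predT) //=.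
rewrite (bigD1 [set: Pt d]) //= [X in _ + X = _]big1 ?addr0; last first.
  move=> U /negbTE UT.
  have [p pU] : exists p, p \notin U.
    apply/existsP; move: UT; apply: contraFT; rewrite negb_exists => /forallP H.
    by apply/eqP/setP => p; move: (H p); rewrite !inE negbK => ->.
  rewrite -scaler_suml.
  rewrite (toggle_sum (P := fun T => U \subset T) (F := fun T => sgn T * sgn U) (p := p)).
  - by rewrite scale0r.
  - move=> X pX; apply/idP/idP => H; last exact: (subset_trans H (subsetUr _ _)).
    apply/subsetP => x xU; move/subsetP: H => /(_ x xU).
    by case/setU1P => // E; move: pU; rewrite -E xU.
  - by move=> X pX; rewrite sgnU1 // mulNr.
rewrite (big_pred1 [set: Pt d]); last by move=> T /=; rewrite subTset.
by rewrite sgn_sq scale1r A_setT.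
Qed.


Lemma E_A d (T W : {set Pt d}) :
  E T *m Amat W = \sum_(U : {set Pt d} | U \subset T) (sgn T * sgn U) *: Amat (U :&: W).
Proof. by rewrite /E mulmx_suml; apply: eq_bigr => U _; rewrite -scalemxAl A_mul. Qed.

Lemma A_E_comm d (T W : {set Pt d}) : Amat W *m E T = E T *m Amat W.
Proof.
rewrite E_A /E mulmx_sumr; apply: eq_bigr => U _.
by rewrite -scalemxAr A_mul setIC.
Qed.

Lemma E_A0 d (T W : {set Pt d}) : ~~ (T \subset W) -> E T *m Amat W = 0.
Proof.
move=> TW; have [p /setDP[pT pW]] : exists p, p \in T :\: W.
  by apply/set0Pn; rewrite setD_eq0.
rewrite E_A (toggle_sum (P := fun U => U \subset T)
   (F := fun U => (sgn T * sgn U) *: Amat (U :&: W)) (p := p)) //.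
- by move=> X pX; rewrite subUset sub1set pT.
- move=> X pX; rewrite sgnU1 // mulrN scaleNr; congr (- (_ *: _)).
  rewrite setIUl; congr (Amat _).
  apply/setP => q; rewrite !inE; case: eqP => // -> /=.
  by rewrite (negbTE pW).
Qed.

Lemma E_AT d (T : {set Pt d}) : E T *m Amat T = E T.
Proof.
rewrite E_A /E; apply: eq_bigr => U UT.
by move/setIidPl: UT => ->.
Qed.

Definition psi d (s : Sd (m:=m) d) (T : {set Pt d}) := \tr (Pmat s *m E T).
Definition stable d (s : Sd (m:=m) d) (T : {set Pt d}) := shat s @: T \subset T.

Lemma psi_nonstable d (s : Sd (m:=m) d) (T : {set Pt d}) : ~~ stable s T -> psi s T = 0.
Proof.
move=> ns; rewrite /psi -E_AT mulmxA mxtrace_mulC mulmxA A_perm -mulmxA A_E_comm.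
rewrite E_A0 ?mulmx0 ?mxtrace0 //.
apply: contra ns => sub.
have : T == shat s @: T.
  by rewrite eqEcard sub /= (card_imset _ (@perm_inj _ (shat s))).
by rewrite /stable => /eqP <-.
Qed.

Lemma char_sum d (s : Sd (m:=m) d) :
  \tr (Pmat s) = \sum_(T : {set Pt d}) psi s T.
Proof.
rewrite -[Pmat s]mulmx1 -sum_E mulmx_sumr /psi.
by rewrite raddf_sum.
Qed.


Lemma tg_tagged d (q : Pt d) : tg (tagged q) = q.
Proof. by case: q. Qed.

Definition img (x d : obj m) (f : mor x d) : {set Pt d} :=
  [set q : Pt d | [exists a : 'I_(tnth x (tag q)), f (tag q) a == Some (tagged q)]].

Lemma card_img (x d : obj m) (f : mor x d) : (#|img f| <= #|{: Pt x}|)%N.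
Proof.
pose g := fun p : Pt x => omap (@tg d (tag p)) (f (tag p) (tagged p)).
rewrite -(card_imset _ (@Some_inj _)).
apply: (leq_trans _ (leq_imset_card g _)); apply: subset_leq_card.
apply/subsetP => _ /imsetP[q qI ->]; move: qI; rewrite inE => /existsP[a /eqP fa].
apply/imsetP; exists (tg a) => //; rewrite /g /= fa /=.
by rewrite tg_tagged.
Qed.

Lemma fE_zero (x d : obj m) (f : mor x d) (T : {set Pt d}) :
  isMor f -> (#|{: Pt x}| < #|T|)%N -> mact V f *m E T = 0.
Proof.
move=> Mf big.
have [p /setDP[pT pI]] : exists p, p \in T :\: img f.
  apply/set0Pn; rewrite setD_eq0; apply: contraL big => sub.
  by rewrite -leqNgt (leq_trans (subset_leq_card sub)) ?card_img.
rewrite /E mulmx_sumr.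
rewrite (eq_bigr (fun U => (sgn T * sgn U) *: mact V (mcomp (iot U) f))); last first.
  by move=> U _; rewrite -scalemxAr /Amat act_comp ?isMor_iot.
rewrite (toggle_sum (P := fun U => U \subset T)
   (F := fun U => (sgn T * sgn U) *: mact V (mcomp (iot U) f)) (p := p)) //.
- by move=> X pX; rewrite subUset sub1set pT.
- move=> X pX; rewrite sgnU1 // mulrN scaleNr; congr (- (_ *: mact V _)).
  apply: morP => i a; rewrite !compE.
  case fa: (f i a) => [b|] //=; rewrite !iotE !inE.
  case: eqP => //= E; move: pI; rewrite -E inE; case/existsP; exists a.
  by rewrite fa.
Qed.

Lemma E_vanish : fin_gen V ->
  exists N, forall d (T : {set Pt d}), (N < #|T|)%N -> E T = 0.
Proof.
case=> gens Hgen; exists (\max_(g <- gens) #|{: Pt (tag g)}|) => d T big.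
have : (1%:M <= kermx (E T))%MS.
  apply: submx_trans (Hgen d) _; rewrite big_seq.
  apply: (big_ind (fun X => X <= kermx (E T))%MS); first exact: sub0mx.
    by move=> X Y HX HY; rewrite addsmx_sub HX.
  move=> g gin; apply/sumsmx_subP => f Mf.
  rewrite genmxE sub_kermx -mulmxA fE_zero ?mulmx0 //.
  apply: leq_ltn_trans big.
  exact: (@leq_bigmax_seq _ gens predT (fun g => #|{: Pt (tag g)}|)).
by rewrite sub_kermx mul1mx => /eqP.
Qed.


Section Transport.
Variables (d d' : obj m) (s : Sd (m:=m) d) (s' : Sd (m:=m) d').
Variables (T : {set Pt d}) (T' : {set Pt d'}).
Variable (be : forall i : 'I_m, 'I_(tnth d i) -> option 'I_(tnth d' i)).
Variable (ga : forall i : 'I_m, 'I_(tnth d' i) -> option 'I_(tnth d i)).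
Hypothesis H1 : forall i (a : 'I_(tnth d i)), tg a \notin T -> be a = None.
Hypothesis H2 : forall i (b : 'I_(tnth d' i)), tg b \notin T' -> ga b = None.
Hypothesis H3 : forall i (a : 'I_(tnth d i)), tg a \in T -> exists b, be a = Some b /\ ga b = Some a.
Hypothesis H4 : forall i (b : 'I_(tnth d' i)), tg b \in T' -> exists a, ga b = Some a /\ be a = Some b.
Hypothesis H5 : forall i (a : 'I_(tnth d i)), tg a \in T -> be (s i a) = omap (s' i) (be a).

Lemma D1 i (a : 'I_(tnth d i)) b : be a = Some b -> [/\ ga b = Some a, tg a \in T & tg b \in T'].
Proof.
move=> E.
have aT : tg a \in T by apply: contraTT isT => /H1; rewrite E.
have [b0 [E0 G0]] := H3 aT; move: E0; rewrite E => -[Eb]; subst b0.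
split=> //; apply: contraTT isT => /H2; by rewrite G0.
Qed.

Lemma D2 i (b : 'I_(tnth d' i)) a : ga b = Some a -> [/\ be a = Some b, tg a \in T & tg b \in T'].
Proof.
move=> E.
have bT : tg b \in T' by apply: contraTT isT => /H2; rewrite E.
have [a0 [E0 G0]] := H4 bT; move: E0; rewrite E => -[Eb]; subst a0.
split=> //; apply: contraTT isT => /H1; by rewrite G0.
Qed.

Definition gmor : mor d d' := [ffun i => [ffun a => be a]].
Definition hmor : mor d' d := [ffun i => [ffun b => ga b]].

Lemma gmorE i (a : 'I_(tnth d i)) : gmor i a = be a.
Proof. by rewrite !ffunE. Qed.
Lemma hmorE i (b : 'I_(tnth d' i)) : hmor i b = ga b.
Proof. by rewrite !ffunE. Qed.

Lemma isMor_g : isMor gmor.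
Proof.
apply/isMorP => i u v; rewrite !ffunE.
case E: (be u) => [b|] // _ /esym Ev.
by have [G1 _ _] := D1 E; have [G2 _ _] := D1 Ev; move: G1; rewrite G2 => -[].
Qed.

Lemma isMor_h : isMor hmor.
Proof.
apply/isMorP => i u v; rewrite !ffunE.
case E: (ga u) => [b|] // _ /esym Ev.
by have [G1 _ _] := D2 E; have [G2 _ _] := D2 Ev; move: G1; rewrite G2 => -[].
Qed.

Definition Phi (U' : {set Pt d'}) : {set Pt d} :=
  [set p : Pt d | if be (tagged p) is Some b then tg b \in U' else false].
Definition Psi (U : {set Pt d}) : {set Pt d'} :=
  [set q : Pt d' | if ga (tagged q) is Some a then tg a \in U else false].

Lemma comp_hUg (U' : {set Pt d'}) :
  mcomp hmor (mcomp (iot U') gmor) = iot (Phi U').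
Proof.
apply: morP => i a; rewrite !compE gmorE iotE inE /=.
case E: (be a) => [b|] //=; rewrite iotE.
by case: ifP => //= _; rewrite hmorE; case: (D1 E).
Qed.

Lemma PhiPsi (U : {set Pt d}) : U \subset T -> Phi (Psi U) = U.
Proof.
move=> UT; apply/setP => -[i a]; rewrite !inE /=.
case E: (be a) => [b|]; rewrite ?inE /=.
  by have [-> _ _] := D1 E.
apply/esym/negbTE/negP => aU.
by have [b [E' _]] := H3 (subsetP UT _ aU); rewrite E' in E.
Qed.

Lemma PsiPhi (U' : {set Pt d'}) : Psi (Phi U') = U' :&: T'.
Proof.
apply/setP => -[i b]; rewrite !inE /=.
case E: (ga b) => [a|]; rewrite ?inE /=.
  by have [-> _ ->] := D2 E; rewrite andbT.
apply/esym/negbTE; rewrite negb_and orbC; apply/orP; left.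
by apply/negP => bT; have [a [E' _]] := H4 bT; rewrite E' in E.
Qed.

Lemma Phi_sub (U' : {set Pt d'}) : Phi U' \subset T.
Proof.
apply/subsetP => -[i a]; rewrite inE /=.
by case E: (be a) => [b|] // _; case: (D1 E).
Qed.

Lemma card_Phi (U' : {set Pt d'}) : U' \subset T' -> #|Phi U'| = #|U'|.
Proof.
move=> UT.
pose bh := fun p : Pt d => omap (@tg d' (tag p)) (be (tagged p)).
have inj : {in Phi U' &, injective bh}.
  move=> [i a] [j a'] /=; rewrite !inE /= /bh /=.
  case E: (be a) => [b|] // _; case E': (be a') => [b'|] // _ /Some_inj Eb.
  have ij : i = j := congr1 tag Eb; subst j.
  have bb := eq_from_Tagged Eb; subst b'.
  by have [G1 _ _] := D1 E; have [G2 _ _] := D1 E'; move: G1; rewrite G2 => -[->].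
rewrite -(card_in_imset inj) -(card_imset U' (@Some_inj _)).
apply: eq_card => q; apply/imsetP/imsetP.
  case=> -[i a]; rewrite inE /= /bh /=; case E: (be a) => [b|] // bU ->.
  by exists (tg b).
case=> -[i b] bU ->; have [a [G E]] := H4 (subsetP UT _ bU).
by exists (tg a); rewrite ?inE /= /bh /= E.
Qed.

Lemma Phi_T : Phi T' = T.
Proof.
apply/setP => -[i a]; rewrite inE /=.
case E: (be _) => [b|]; first by have [_ aT bT] := D1 E; rewrite bT; symmetry; exact: aT.
apply/esym/negbTE/negP => aT.
by have [b [E' _]] := H3 aT; rewrite E' in E.
Qed.

Lemma E_transport : E T = mact V gmor *m E T' *m mact V hmor.
Proof.
rewrite /E mulmx_sumr mulmx_suml.
rewrite [RHS](eq_bigr (fun U' => (sgn T' * sgn U') *: Amat (Phi U'))); last first.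
  move=> U' _; rewrite -scalemxAr -scalemxAl /Amat -!act_comp ?isMor_comp ?isMor_g ?isMor_h
    ?isMor_iot //.
  by rewrite comp_hUg.
rewrite (reindex_onto Phi Psi) /=; last by move=> U; apply: PhiPsi.
apply: eq_big => U'.
  rewrite Phi_sub PsiPhi /=; apply/idP/idP => [/eqP <-|/setIidPl ->]; [exact: subsetIr | exact: eqxx].
move=> /andP[_ /eqP E]; have UT : U' \subset T' by rewrite -E PsiPhi subsetIr.
by rewrite /sgn card_Phi // -Phi_T card_Phi.
Qed.

Lemma psi_transport : psi s T = psi s' T'.
Proof.
rewrite /psi E_transport !mulmxA mxtrace_mulC !mulmxA.
have -> : mact V hmor *m Pmat s *m mact V gmor = Amat T' *m Pmat s'.
  rewrite /Pmat /Amat -!act_comp ?isMor_comp ?isMor_g ?isMor_h ?isMor_iot ?isMor_perm //.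
  congr (mact V _); apply: morP => i b; rewrite !compE hmorE /=.
  case G: (ga b) => [a|] /=.
    have [Eb aT bT] := D2 G; rewrite permmorE /= gmorE H5 // Eb /= iotE bT /=.
    by rewrite permmorE.
  rewrite iotE; case: ifP => // bT; have [a [Ga _]] := H4 bT; by rewrite Ga in G.
by rewrite -mulmxA mxtrace_mulC -mulmxA E_AT.
Qed.

End Transport.

End Core.

End PA.
Import PA.

Module PB.

Section PermGen.
Variables (A : finType) (s : {perm A}).

Lemma permXS n (x : A) : (s ^+ n.+1)%g x = s ((s ^+ n)%g x).
Proof. by rewrite !permX. Qed.

Lemma permX_orbit q (x : A) : (s ^+ (q * #|porbit s x|))%g x = x.
Proof.
elim: q => [|q IH]; first by rewrite mul0n expg0 perm1.
by rewrite mulSn expgD permM (permX s x #|porbit s x|) iter_porbit IH.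
Qed.

Lemma permX_mod u (x : A) : (s ^+ u)%g x = (s ^+ (u %% #|porbit s x|))%g x.
Proof.
by rewrite {1}(divn_eq u #|porbit s x|) expgD permM permX_orbit.
Qed.

Lemma porbit_stable (X : {set A}) (x : A) :
  (forall a, a \in X -> s a \in X) -> x \in X -> porbit s x \subset X.
Proof.
move=> HX xX; apply/subsetP => y /porbitP[i ->].
elim: i => [|i IH]; first by rewrite expg0 perm1.
by rewrite permXS HX.
Qed.

Lemma porbit_eq (C : {set A}) (x : A) : C \in porbits s -> x \in C -> porbit s x = C.
Proof.
by case/imsetP => z _ -> xz; apply/eqP; rewrite eq_porbit_mem.
Qed.

Lemma index_traject (x : A) k :
  k < #|porbit s x| -> index ((s ^+ k)%g x) (traject s x #|porbit s x|) = k.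
Proof.
move=> kj.
by rewrite permX -(nth_traject _ kj) index_uniq ?size_traject // uniq_traject_porbit.
Qed.

Lemma traject_index (x a : A) : a \in porbit s x ->
  let k := index a (traject s x #|porbit s x|) in
  k < #|porbit s x| /\ (s ^+ k)%g x = a.
Proof.
move=> ax /=.
have kj : index a (traject s x #|porbit s x|) < #|porbit s x|.
  by rewrite -[X in _ < X](size_traject s x) index_mem -porbit_traject.
split=> //; by rewrite permX -(nth_traject _ kj) nth_index // -porbit_traject.
Qed.

End PermGen.

Definition orbs (A : finType) (s : {perm A}) (X : {set A}) (j : nat) : {set {set A}} :=
  [set C in porbits s | (C \subset X) && (#|C| == j)].

Definition isoF (A B : finType) (s : {perm A}) (X : {set A}) (s' : {perm B}) (Y : {set B})
  (a : A) : option B :=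
  if a \in X then
    let C := porbit s a in
    let j := #|C| in
    let C' := nth set0 (enum (orbs s' Y j)) (index C (enum (orbs s X j))) in
    match [pick x in C], [pick y in C'] with
    | Some x, Some y => Some ((s' ^+ (index a (traject s x j)))%g y)
    | _, _ => None
    end
  else None.

Section Iso.
Variables (A B : finType) (s : {perm A}) (X : {set A}) (s' : {perm B}) (Y : {set B}).
Hypothesis HX : forall a, a \in X -> s a \in X.
Hypothesis HY : forall b, b \in Y -> s' b \in Y.
Hypothesis Hcnt : forall j, #|orbs s X j| = #|orbs s' Y j|.

Lemma isoF_out a : a \notin X -> isoF s X s' Y a = None.
Proof. by rewrite /isoF => /negbTE ->. Qed.

Lemma isoF_spec a : a \in X ->
  exists x y (C' : {set B}),
  [/\ porbit s x = porbit s a, porbit s' y = C',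
      C' = nth set0 (enum (orbs s' Y #|porbit s a|))
             (index (porbit s a) (enum (orbs s X #|porbit s a|))),
      C' \in orbs s' Y #|porbit s a| &
      [/\ [pick z in porbit s a] = Some x, [pick z in C'] = Some y &
      isoF s X s' Y a = Some ((s' ^+ (index a (traject s x #|porbit s a|)))%g y)]].
Proof.
move=> aX.
set C := porbit s a; set j := #|C|.
have CO : C \in orbs s X j.
  by rewrite inE imset_f //= eqxx andbT porbit_stable.
have CE : C \in enum (orbs s X j) by rewrite mem_enum.
set C' := nth set0 (enum (orbs s' Y j)) (index C (enum (orbs s X j))).
have C'O : C' \in orbs s' Y j.
  rewrite -mem_enum mem_nth // -cardE -Hcnt cardE index_mem //.
have [x px xC] : exists2 x, [pick z in C] = Some x & x \in C.
  case: pickP => [x xC|H]; first by exists x.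
  by move: (H a); rewrite /= porbit_id.
have [y py yC] : exists2 y, [pick z in C'] = Some y & y \in C'.
  case: pickP => [y yC|H]; first by exists y.
  move: C'O; rewrite inE => /andP[_ /andP[_ /eqP cC]].
  have : 0 < #|C'| by rewrite cC /j lt0n card_porbit_neq0.
  by case/card_gt0P => z zC; move: (H z); rewrite /= zC.
have e1 : porbit s x = C by apply: porbit_eq xC; rewrite imset_f.
have e2 : porbit s' y = C'.
  by move: C'O; rewrite inE => /andP[C'p _]; apply: porbit_eq.
have e3 : isoF s X s' Y a = Some ((s' ^+ (index a (traject s x j)))%g y).
  by rewrite /isoF aX -/C -/j -/C' px py.
by exists x, y, C'.
Qed.

End Iso.

Section Iso2.
Variables (A B : finType) (s : {perm A}) (X : {set A}) (s' : {perm B}) (Y : {set B}).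
Hypothesis HX : forall a, a \in X -> s a \in X.
Hypothesis HY : forall b, b \in Y -> s' b \in Y.
Hypothesis Hcnt : forall j, #|orbs s X j| = #|orbs s' Y j|.

Lemma orbsP (D : finType) (t : {perm D}) (Z : {set D}) j C :
  C \in orbs t Z j -> [/\ C \in porbits t, C \subset Z & #|C| = j].
Proof. by rewrite inE => /andP[-> /andP[-> /eqP ->]]. Qed.

Lemma isoF_round a : a \in X ->
  exists b, [/\ isoF s X s' Y a = Some b, isoF s' Y s X b = Some a & b \in Y].
Proof.
move=> aX.
have Hcnt' : forall j, #|orbs s' Y j| = #|orbs s X j| by move=> j; rewrite Hcnt.
have [x [y [C' [e1 e2 e3 C'O [px py ea]]]]] := isoF_spec HX Hcnt aX.
set j := #|porbit s a| in e3 C'O ea.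
have [C'p C'Y cC'] := orbsP C'O.
have ax : a \in porbit s x by rewrite e1 porbit_id.
have [kj ka] := traject_index ax.
rewrite e1 -/j in kj ka ea.
set k := index a (traject s x j) in kj ka ea.
exists ((s' ^+ k)%g y); split=> //; last first.
  by apply: (subsetP C'Y); rewrite -e2 mem_porbit.
have bY : (s' ^+ k)%g y \in Y by apply: (subsetP C'Y); rewrite -e2 mem_porbit.
have [x2 [y2 [C2 [f1 f2 f3 C2O [px2 py2 eb]]]]] := isoF_spec HY Hcnt' bY.
have pb : porbit s' ((s' ^+ k)%g y) = C' by rewrite porbit_perm.
rewrite pb cC' in f3 eb; rewrite pb in px2.
have CE : porbit s a \in enum (orbs s X j).
  by rewrite mem_enum inE imset_f //= eqxx andbT porbit_stable.
have idx : index C' (enum (orbs s' Y j)) = index (porbit s a) (enum (orbs s X j)).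
  rewrite e3 index_uniq ?enum_uniq //.
  by rewrite -cardE -Hcnt cardE index_mem.
rewrite idx nth_index // in f3; rewrite f3 in py2.
have ey : x2 = y by move: px2; rewrite py => -[].
have ex : y2 = x by move: py2; rewrite px => -[].
subst x2 y2; rewrite eb.
have kj' : k < #|porbit s' y| by rewrite e2 cC'.
by rewrite -cC' -e2 index_traject // ka.
Qed.

Lemma isoF_comm a : a \in X ->
  isoF s X s' Y (s a) = omap s' (isoF s X s' Y a).
Proof.
move=> aX.
have saX := HX aX.
have [x [y [C' [e1 e2 e3 C'O [px py ea]]]]] := isoF_spec HX Hcnt aX.
have [x2 [y2 [C2 [f1 f2 f3 C2O [px2 py2 eb]]]]] := isoF_spec HX Hcnt saX.
have ps : porbit s (s a) = porbit s a by have := porbit_perm s 1 a; rewrite expg1.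
rewrite ps in f1 f3 px2 eb; rewrite -e3 in f3; rewrite f3 in py2.
have ey : x2 = x by move: px2; rewrite px => -[].
have ex : y2 = y by move: py2; rewrite py => -[].
subst x2 y2; rewrite eb ea /=.
have [C'p C'Y cC'] := orbsP C'O.
set j := #|porbit s a| in cC' ea eb *.
have ax : a \in porbit s x by rewrite e1 porbit_id.
have [kj ka] := traject_index ax.
rewrite e1 -/j in kj ka.
set k := index a (traject s x j) in kj ka ea *.
have sax : s a = (s ^+ k.+1)%g x by rewrite permXS ka.
have jx : #|porbit s x| = j by rewrite e1.
have jy : #|porbit s' y| = j by rewrite e2.
have k2 : index (s a) (traject s x j) = k.+1 %% j.
  rewrite sax permX_mod jx -{2}jx index_traject // jx ltn_mod.
  by rewrite lt0n /j card_porbit_neq0.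
by rewrite k2 -jy -permX_mod permXS.
Qed.

End Iso2.

End PB.
Import PB.

Module PC.

Section Comb.
Variables (m : nat) (d : obj m) (s : Sd (m:=m) d).

Definition coord (i : 'I_m) : {set Pt d} := [set p | tag p == i].
Definition OmT (T : {set Pt d}) (i : 'I_m) (j : nat) : {set {set Pt d}} :=
  [set C in porbits (shat s) | [&& C \subset T, C \subset coord i & #|C| == j]].
Definition Tco (T : {set Pt d}) (i : 'I_m) : {set 'I_(tnth d i)} := [set a | tg a \in T].

Lemma shatX n i (a : 'I_(tnth d i)) : (shat s ^+ n)%g (tg a) = tg ((s i ^+ n)%g a).
Proof.
elim: n => [|n IH]; first by rewrite !expg0 !perm1.
by rewrite !permXS IH shat_tg.
Qed.

Lemma tg_inj i : injective (@tg m d i).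
Proof. by move=> a b E; apply: eq_from_Tagged E. Qed.

Lemma porbit_shat i (a : 'I_(tnth d i)) :
  porbit (shat s) (tg a) = (@tg m d i) @: porbit (s i) a.
Proof.
apply/setP => q; apply/porbitP/imsetP.
  by case=> n ->; exists ((s i ^+ n)%g a); rewrite ?mem_porbit ?shatX.
by case=> b /porbitP[n ->] ->; exists n; rewrite shatX.
Qed.

Lemma tag_orbit (p q : Pt d) : q \in porbit (shat s) p -> tag q = tag p.
Proof.
case: p => i a; rewrite -[existT _ i a]/(tg a) porbit_shat.
by case/imsetP => b _ ->.
Qed.

Lemma cnt_bridge T i j : #|OmT T i j| = #|orbs (s i) (Tco T i) j|.
Proof.
rewrite -(card_imset _ (imset_inj (@tg_inj i))).
apply: eq_card => D; apply/idP/imsetP.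
  rewrite inE => /andP[/imsetP[p _ ->] /and3P[DT Dc /eqP Dj]].
  case: p DT Dc Dj => i' a DT Dc Dj.
  have ei : i' = i.
    by move/subsetP: Dc => /(_ _ (porbit_id _ _)); rewrite inE => /eqP.
  subst i'; rewrite -[existT _ i a]/(tg a) porbit_shat in DT Dj *.
  exists (porbit (s i) a) => //.
  rewrite inE imset_f //= -Dj card_imset ?eqxx ?andbT; last exact: tg_inj.
  apply/subsetP => b bC; rewrite inE; apply: (subsetP DT); exact: imset_f.
case=> C; rewrite inE => /andP[/imsetP[a _ ->] /andP[CT /eqP Cj]] ->.
rewrite inE -porbit_shat imset_f //=; apply/and3P; split.
- rewrite porbit_shat; apply/subsetP => _ /imsetP[b bC ->].
  by move/subsetP: CT => /(_ b bC); rewrite inE.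
- by rewrite porbit_shat; apply/subsetP => _ /imsetP[b _ ->]; rewrite inE.
- by rewrite porbit_shat card_imset ?Cj //; exact: tg_inj.
Qed.


Lemma orbit_ne (C : {set Pt d}) : C \in porbits (shat s) -> exists p, p \in C.
Proof. by case/imsetP => p _ ->; exists p; exact: porbit_id. Qed.

Lemma orbit_eq2 (C C' : {set Pt d}) p : C \in porbits (shat s) -> C' \in porbits (shat s) ->
  p \in C -> p \in C' -> C = C'.
Proof. by move=> C1 C2 p1 p2; rewrite -(porbit_eq C1 p1) (porbit_eq C2 p2). Qed.

Lemma orbit_coord (C : {set Pt d}) p : C \in porbits (shat s) -> p \in C -> C \subset coord (tag p).
Proof.
move=> Co pC; rewrite -(porbit_eq Co pC); apply/subsetP => q qp.
by rewrite inE (tag_orbit qp).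
Qed.

Lemma orbit_in (C : {set Pt d}) p : C \in porbits (shat s) -> p \in C -> shat s p \in C.
Proof.
move=> Co pC; rewrite -(porbit_eq Co pC).
by have := mem_porbit (shat s) 1 p; rewrite expg1.
Qed.

Lemma stable_orbit (T : {set Pt d}) p : stable s T -> p \in T -> porbit (shat s) p \subset T.
Proof.
move=> st pT; apply: porbit_stable pT => q qT.
by apply: (subsetP st); exact: imset_f.
Qed.

Lemma stable_Tco (T : {set Pt d}) i : stable s T ->
  forall a, a \in Tco T i -> s i a \in Tco T i.
Proof.
move=> st a; rewrite !inE => aT; rewrite -shat_tg.
by apply: (subsetP st); exact: imset_f.
Qed.

Lemma OmT_kind T T' i j i' j' (C : {set Pt d}) :
  C \in OmT T i j -> C \in OmT T' i' j' -> i = i' /\ j = j'.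
Proof.
rewrite !inE => /andP[Co /and3P[_ Ci /eqP Cj]] /andP[_ /and3P[_ Ci' /eqP Cj']].
have [p pC] := orbit_ne Co.
move/subsetP: Ci => /(_ p pC); move/subsetP: Ci' => /(_ p pC).
by rewrite !inE => /eqP -> /eqP ->; rewrite -Cj -Cj'.
Qed.

Section Ty.
Variable N : nat.
Definition K := ('I_m * 'I_N)%type.

Definition inTy (mu : {ffun K -> 'I_N.+1}) (T : {set Pt d}) : bool :=
  [&& stable s T,
      [forall C in porbits (shat s), (C \subset T) ==> (#|C| <= N)] &
      [forall kk : K, #|OmT T kk.1 kk.2.+1| == mu kk]].

Definition cntF (mu : {ffun K -> 'I_N.+1}) (i : 'I_m) (j : nat) : nat :=
  if j is j'.+1 then (if @insub nat (fun x => x < N) 'I_N j' is Some o then val (mu (i, o)) else 0)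
  else 0.

Lemma cnt_char mu T i j : inTy mu T -> #|orbs (s i) (Tco T i) j| = cntF mu i j.
Proof.
case/and3P => st /forall_inP Hsz /forallP Hc.
rewrite -cnt_bridge /cntF; case: j => [|j].
  apply/eqP; rewrite cards_eq0; apply/eqP/setP => C; rewrite !inE.
  apply/negbTE; apply/negP => /andP[Co /and3P[_ _ /eqP C0]].
  by have [p pC] := orbit_ne Co; rewrite (cards0_eq C0) inE in pC.
case: insubP => [o jN oj|jN].
  by move: (Hc (i, o)) => /= /eqP; rewrite oj.
apply/eqP; rewrite cards_eq0; apply/eqP/setP => C; rewrite !inE.
apply/negbTE; apply/negP => /andP[Co /and3P[CT _ /eqP Cj]].
by move: (Hsz C Co); rewrite CT Cj; apply/negP.
Qed.


Definition Fam (T : {set Pt d}) : {ffun K -> {set {set Pt d}}} :=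
  [ffun kk : K => OmT T kk.1 kk.2.+1].
Definition Fpred (mu : {ffun K -> 'I_N.+1}) (kk : K) : pred {set {set Pt d}} :=
  fun O : {set {set Pt d}} => (O \subset OmT setT kk.1 kk.2.+1) && (#|O| == mu kk).
Definition Un (f : {ffun K -> {set {set Pt d}}}) : {set Pt d} :=
  \bigcup_(kk : K) \bigcup_(C in f kk) C.

Lemma UnFam mu T : inTy mu T -> Un (Fam T) = T.
Proof.
case/and3P => st /forall_inP Hsz _.
apply/setP => p; apply/bigcupP/idP.
  case=> kk _ /bigcupP[C]; rewrite ffunE inE => /andP[_ /and3P[CT _ _]].
  exact: (subsetP CT).
move=> pT; set C := porbit (shat s) p.
have CT : C \subset T by exact: stable_orbit.
have Co : C \in porbits (shat s) by exact: imset_f.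
have cN := Hsz C Co; rewrite CT /= in cN.
have c0 : 0 < #|C| by rewrite lt0n card_porbit_neq0.
have jN : #|C|.-1 < N by rewrite prednK.
exists (tag p, Ordinal jN) => //; apply/bigcupP; exists C; last exact: porbit_id.
rewrite ffunE inE Co CT /= prednK // eqxx andbT.
by apply/subsetP => q qC; rewrite inE (tag_orbit qC).
Qed.

Lemma Fam_family mu T : inTy mu T -> Fam T \in family (Fpred mu).
Proof.
case/and3P => _ _ /forallP Hc; apply/familyP => kk; rewrite ffunE unfold_in /= Hc andbT.
apply/subsetP => C; rewrite !inE => /andP[-> /and3P[_ -> ->]].
by rewrite subsetT.
Qed.

Lemma Un_orbit f (C : {set Pt d}) mu : f \in family (Fpred mu) ->
  C \in porbits (shat s) -> C \subset Un f -> exists kk, C \in f kk.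
Proof.
move=> /familyP Hf Co CU; have [p pC] := orbit_ne Co.
have /bigcupP[kk _ /bigcupP[C' C'f pC']] := subsetP CU p pC.
exists kk; suff -> : C = C' by [].
move: (Hf kk); rewrite unfold_in => /andP[/subsetP /(_ C' C'f)]; rewrite inE => /andP[C'o _] _.
exact: orbit_eq2 pC pC'.
Qed.

Lemma Un_inTy mu f : f \in family (Fpred mu) -> inTy mu (Un f) /\ Fam (Un f) = f.
Proof.
move=> Ff; have /familyP Hf := Ff.
have Hsub : forall kk (C : {set Pt d}), C \in f kk -> C \in OmT setT kk.1 kk.2.+1.
  by move=> kk C Cf; move: (Hf kk); rewrite unfold_in => /andP[/subsetP /(_ C Cf) ? _].
have Hfam : Fam (Un f) = f.
  apply/ffunP => kk; rewrite ffunE; apply/setP => C; apply/idP/idP.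
    rewrite inE => /andP[Co /and3P[CU Ci Cj]].
    have [kk' Cf] := Un_orbit Ff Co CU.
    have CO : C \in OmT setT kk.1 kk.2.+1 by rewrite inE Co Ci Cj subsetT.
    have [e1 e2] := OmT_kind (Hsub _ _ Cf) CO.
    have ekk : kk' = kk.
      by move: e1 e2; case: kk' {Cf} => [i1 j1]; case: kk {CO Ci Cj} => [i2 j2] /= -> [/val_inj ->].
    by rewrite -ekk.
  move=> Cf; have := Hsub _ _ Cf; rewrite !inE => /andP[Co /and3P[_ Ci Cj]].
  rewrite Co Ci Cj andbT /=. rewrite andbT.
  by apply/subsetP => p pC; apply/bigcupP; exists kk => //; apply/bigcupP; exists C.
split=> //; apply/and3P; split.
- apply/subsetP => _ /imsetP[p /bigcupP[kk _ /bigcupP[C Cf pC]] ->].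
  apply/bigcupP; exists kk => //; apply/bigcupP; exists C => //.
  have := Hsub _ _ Cf; rewrite inE => /andP[Co _]; exact: orbit_in.
- apply/forall_inP => C Co; apply/implyP => CU.
  have [kk Cf] := Un_orbit Ff Co CU; have := Hsub _ _ Cf.
  by rewrite inE => /andP[_ /and3P[_ _ /eqP ->]].
- apply/forallP => kk; have := congr1 (fun g : {ffun K -> _} => g kk) Hfam; rewrite /= ffunE => ->.
  by move: (Hf kk); rewrite unfold_in => /andP[_].
Qed.


Lemma foldr_prod (I : Type) (r : seq I) (f : I -> nat) :
  foldr muln 1 (map f r) = \prod_(x <- r) f x.
Proof. by elim: r => [|x r IH]; rewrite ?big_nil ?big_cons //= IH. Qed.

Lemma card_inTy mu :
  #|[set T | inTy mu T]| = \prod_(kk : K) 'C(#|OmT setT kk.1 kk.2.+1|, mu kk).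
Proof.
have inj : {in [set T | inTy mu T] &, injective Fam}.
  move=> T1 T2; rewrite !inE => H1 H2 E.
  by rewrite -(UnFam H1) -(UnFam H2) E.
rewrite -(card_in_imset inj).
transitivity #|family (Fpred mu)|.
  apply: eq_card => f; apply/imsetP/idP.
    by case=> T; rewrite inE => HT ->; exact: Fam_family.
  by move=> Ff; have [H1 H2] := Un_inTy Ff; exists (Un f); rewrite ?inE.
rewrite card_family foldr_prod big_enum /=.
apply: eq_big => // kk _.
rewrite -cards_draws; apply: eq_card => O; by rewrite inE unfold_in.
Qed.


Lemma inTy_unique mu1 mu2 T : inTy mu1 T -> inTy mu2 T -> mu1 = mu2.
Proof.
case/and3P => _ _ /forallP H1; case/and3P => _ _ /forallP H2.
apply/ffunP => kk; apply/val_inj.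
by move: (H1 kk) (H2 kk) => /eqP -> /eqP.
Qed.

Lemma OmT_le T i j : stable s T -> #|OmT T i j| <= #|T|.
Proof.
move=> st; apply: leq_trans (leq_imset_card (porbit (shat s)) T).
apply: subset_leq_card; apply/subsetP => C; rewrite inE => /andP[Co /and3P[CT _ _]].
have [p pC] := orbit_ne Co; apply/imsetP; exists p; first exact: (subsetP CT).
by rewrite (porbit_eq Co pC).
Qed.

Lemma inTy_exists T : stable s T -> #|T| <= N -> exists mu, inTy mu T.
Proof.
move=> st TN.
exists [ffun kk : K => inord #|OmT T kk.1 kk.2.+1| : 'I_N.+1].
apply/and3P; split=> //.
  apply/forall_inP => C Co; apply/implyP => CT.
  exact: leq_trans (subset_leq_card CT) TN.
apply/forallP => kk; rewrite ffunE inordK //.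
by rewrite ltnS (leq_trans (OmT_le _ _ st)).
Qed.

End Ty.

Lemma ncycles_bridge i j : ncycles j (s i) = #|OmT setT i j|.
Proof.
rewrite cnt_bridge /ncycles; apply: eq_card => C; rewrite !inE.
have -> : Tco setT i = setT by apply/setP => a; rewrite !inE.
by rewrite subsetT.
Qed.

End Comb.

End PC.
Import PC.

Module PD.
Import GRing.Theory.
Local Open Scope ring_scope.

Lemma sum_constP (R : nmodType) (I : finType) (P : pred I) (x : R) :
  \sum_(i | P i) x = x *+ #|[set i | P i]|.
Proof. by rewrite -sumr_const; apply: eq_bigl => i; rewrite inE. Qed.

Section Main.
Variables (k : fieldType) (m : nat) (V : FIsharp_mod k m) (N : nat).

Lemma psi_inTy (mu : {ffun K m N -> 'I_N.+1}) (d d' : obj m) (s : Sd d) (s' : Sd d')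
  (T : {set Pt d}) (T' : {set Pt d'}) :
  inTy s mu T -> inTy s' mu T' -> psi V s T = psi V s' T'.
Proof.
move=> H H'.
have st : stable s T by case/and3P: H.
have st' : stable s' T' by case/and3P: H'.
have HX := fun i => @stable_Tco _ _ _ _ i st.
have HY := fun i => @stable_Tco _ _ _ _ i st'.
have Hc : forall i j, #|orbs (s i) (Tco T i) j| = #|orbs (s' i) (Tco T' i) j|.
  by move=> i j; rewrite (cnt_char i j H) (cnt_char i j H').
have Hc' : forall i j, #|orbs (s' i) (Tco T' i) j| = #|orbs (s i) (Tco T i) j|.
  by move=> i j; rewrite Hc.
apply: (@psi_transport _ _ V _ _ s s' T T'
   (fun i => isoF (s i) (Tco T i) (s' i) (Tco T' i))
   (fun i => isoF (s' i) (Tco T' i) (s i) (Tco T i))).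
- by move=> i a aT; apply: isoF_out; rewrite inE.
- by move=> i b bT; apply: isoF_out; rewrite inE.
- move=> i a aT; have aX : a \in Tco T i by rewrite inE.
  by have [b [E1 E2 _]] := isoF_round (HX i) (HY i) (Hc i) aX; exists b.
- move=> i b bT; have bY : b \in Tco T' i by rewrite inE.
  by have [a [E1 E2 _]] := isoF_round (HY i) (HX i) (Hc' i) bY; exists a.
- move=> i a aT; have aX : a \in Tco T i by rewrite inE.
  by have := isoF_comm (HX i) (Hc i) aX.
Qed.


Lemma exists_v : exists v : {ffun K m N -> 'I_N.+1} -> k,
  forall mu (d : obj m) (s : Sd d) (T : {set Pt d}), inTy s mu T -> psi V s T = v mu.
Proof.
suff /fin_all_exists[v Hv] : forall mu : {ffun K m N -> 'I_N.+1}, exists c : k,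
  forall (d : obj m) (s : Sd d) (T : {set Pt d}), inTy s mu T -> psi V s T = c.
  by exists v.
move=> mu; case: (classic (exists d (s : Sd (m:=m) d) (T : {set Pt d}), inTy s mu T)).
  case=> d0 [s0 [T0 H0]]; exists (psi V s0 T0) => d s T H.
  exact: psi_inTy H H0.
move=> nH; exists 0 => d s T H; case: nH; by exists d, s, T.
Qed.

End Main.

Theorem main_thm (k : fieldType) (m : nat) (V : FIsharp_mod k m) :
  [pchar k] =i pred0 ->
  fin_gen V ->
  exists P : charpoly k m,
    forall (d : obj m) (s : Sd d), character V s = cp_eval P s.
Proof.
move=> c0 fg.
have [N HN] := E_vanish fg.
have [v Hv] := exists_v V N.
pose P := cp_sumF (index_enum {ffun K m N -> 'I_N.+1})
  (fun mu => cp_mul (@cp_const k m (v mu))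
     (cp_prodF (index_enum (K m N)) (fun kk => @binpoly k m (kk.1, val kk.2) (mu kk)))).
exists P => d s.
rewrite /character -/(Pmat V s) char_sum.
have step1 : forall T : {set Pt d},
    psi V s T = \sum_(mu : {ffun K m N -> 'I_N.+1} | inTy s mu T) psi V s T.
  move=> T; have [->|nz] := eqVneq (psi V s T) 0; first by rewrite big1.
  have st : stable s T by apply: contraR nz => /psi_nonstable ->.
  have TN : (#|T| <= N)%N.
    rewrite leqNgt; apply: contra nz => /HN ET.
    by rewrite /psi ET mulmx0 mxtrace0.
  have [mu0 H0] := inTy_exists st TN.
  rewrite (eq_bigl (fun mu => mu == mu0)) ?big_pred1_eq // => mu.
  apply/idP/eqP => [H|->//]; exact: inTy_unique H H0.
rewrite (eq_bigr _ (fun T _ => step1 T)) (exchange_big_dep predT) //=.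
rewrite /P cp_eval_sumF; apply: eq_bigr => mu _.
rewrite cp_eval_mul cp_eval_const cp_eval_prodF.
rewrite (eq_bigr (fun _ => v mu)); last by move=> T; apply: Hv.
rewrite sum_constP -mulr_natr; congr (_ * _).
rewrite card_inTy natr_prod; apply: eq_bigr => kk _.
by rewrite (cp_eval_binpoly _ _ _ c0) /Xvar /= ncycles_bridge.
Qed.

End PD.
Import PD.

Unset Implicit Arguments.
Local Open Scope ring_scope.

Theorem proposition2p3 (k : fieldType) (m : nat) (V : FIsharp_mod k m) :
  [pchar k] =i pred0 ->
  fin_gen V ->
  exists P : charpoly k m,
    forall (d : obj m) (s : Sd d), character V s = cp_eval P s.
Proof. exact: main_thm. Qed.
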